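(* Assume, in the setting described in the context, the saturation assumption: there is a fixed $b_0\in(0,1)$ and a number $b_h<b_0$ such that $$|J(u)-J(u_h^{(2)})| < b_h\,|J(u)-J(\tilde u)|.$$ Then the computable error estimator $\eta^{(2)}$ satisfies $$\underline{c}_h|\eta^{(2)}| \le |J(u)-J(\tilde u)| \le \overline{c}_h|\eta^{(2)}| \quad\text{and}\quad \underline{c}|\eta^{(2)}| \le |J(u)-J(\tilde u)| \le \overline{c}|\eta^{(2)}|,$$ with the positive constants $\underline{c}_h:=1/(1+b_h)$, $\overline{c}_h:=1/(1-b_h)$, $\underline{c}:=1/(1+b_0)$, $\overline{c}:=1/(1-b_0)$.
   Context: Let $U$ and $V$ be real Banach spaces with dual $V^*$. Let $\mathcal{A}:U\to V^*$ be a (nonlinear) operator that is three times continuously Fréchet differentiable, and let $J:U\to\mathbb{R}$ be three times continuously Fréchet differentiable. Notation: $\mathcal{A}(w)(v)$ is the value of $\mathcal{A}(w)\in V^*$ at $v\in V$. For fixed $v$, $\mathcal{A}'(w)(\varphi,v)$, $\mathcal{A}''(w)(\varphi,\psi,v)$ and $\mathcal{A}'''(w)(\varphi,\psi,\chi,v)$ denote the first, second and third Fréchet derivatives of $w\mapsto\mathcal{A}(w)(v)$ at $w$ in the directions $\varphi,\psi,\chi\in U$. Analogously, $J'(w)(\varphi)$ and $J'''(w)(\varphi,\psi,\chi)$ denote derivatives of $J$. Let $u\in U$ satisfy $\mathcal{A}(u)(v)=0$ for all $v\in V$, and let $z\in V$ satisfy $\mathcal{A}'(u)(\varphi,z)=J'(u)(\varphi)$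 for all $\varphi\in U$. Let $U_h^{(2)}\subset U$ and $V_h^{(2)}\subset V$ be finite-dimensional subspaces (enriched spaces). Let $u_h^{(2)}\in U_h^{(2)}$ satisfy $\mathcal{A}(u_h^{(2)})(v)=0$ for all $v\in V_h^{(2)}$. Let $z_h^{(2)}\in V_h^{(2)}$ satisfy $\mathcal{A}'(u_h^{(2)})(\varphi,z_h^{(2)})=J'(u_h^{(2)})(\varphi)$ for all $\varphi\in U_h^{(2)}$. Let $\tilde u\in U_h^{(2)}$ and $\tilde z\in V_h^{(2)}$ be arbitrary fixed elements. Define $\rho(\tilde u)(v):=-\mathcal{A}(\tilde u)(v)$ and $\rho^*(\tilde u,\tilde z)(\varphi):=J'(\tilde u)(\varphi)-\mathcal{A}'(\tilde u)(\varphi,\tilde z)$. With $e^{(2)}:=u_h^{(2)}-\tilde u$ and $e^{(2),*}:=z_h^{(2)}-\tilde z$, define $$\mathcal{R}^{(3)(2)}:=\frac12\int_0^1\Big[J'''(\tilde u+se^{(2)})(e^{(2)},e^{(2)},e^{(2)})-\mathcal{A}'''(\tilde u+se^{(2)})(e^{(2)},e^{(2)},e^{(2)},\tilde z+se^{(2),*})-3\mathcal{A}''(\tilde u+se^{(2)})(e^{(2)},e^{(2)},e^{(2),*})\Big]s(s-1)\,ds,$$ and the computable error estimator $$\eta^{(2)}:=\tfrac12\rho(\tilde u)(z_h^{(2)}-\tilde z)+\tfrac12\rho^*(\tilde u,\tilde z)(u_h^{(2)}-\tilde u)+\rho(\tilde u)(\tilde z)+\mathcal{R}^{(3)(2)}.$$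 *)

(* Defs.v *)
From HB Require Import structures.
From mathcomp Require Import all_boot all_order all_algebra.
From mathcomp Require Import all_classical all_reals all_analysis.
Set Implicit Arguments. Unset Strict Implicit. Unset Printing Implicit Defensive.
Import Order.TTheory GRing.Theory Num.Theory.
Import numFieldNormedType.Exports.
Local Open Scope classical_set_scope.
Local Open Scope ring_scope.

Definition fin_subspace {R : realType} {X : normedModType R} (S : set X) : Prop :=
  exists s : seq X,
    S = [set x | exists c : 'I_(size s) -> R, x = \sum_(i < size s) c i *: s`_i].

Section Forms.
Context {R : realType} {U V : normedModType R}.

Definition blin1 (f : U -> R) : Prop :=
  (forall a x y, f (a *: x + y) = a * f x + f y) /\
  exists C : R, forall x, `|f x| <= C * `|x|.

Definition blin2 (f : U -> U -> R) : Prop :=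
  (forall a x y p, f (a *: x + y) p = a * f x p + f y p) /\
  (forall a x y p, f p (a *: x + y) = a * f p x + f p y) /\
  exists C : R, forall x y, `|f x y| <= C * `|x| * `|y|.

Definition blin3 (f : U -> U -> U -> R) : Prop :=
  (forall a x y p q, f (a *: x + y) p q = a * f x p q + f y p q) /\
  (forall a x y p q, f p (a *: x + y) q = a * f p x q + f p y q) /\
  (forall a x y p q, f p q (a *: x + y) = a * f p q x + f p q y) /\
  exists C : R, forall x y z, `|f x y z| <= C * `|x| * `|y| * `|z|.

(* forms with a last argument in V, linear in it: elements of V^*,
   L(U, V^* ), L(U, L(U, V^* )), ... *)
Definition blinV0 (f : V -> R) : Prop :=
  (forall a x y, f (a *: x + y) = a * f x + f y) /\
  exists C : R, forall v, `|f v| <= C * `|v|.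

Definition blinV1 (f : U -> V -> R) : Prop :=
  (forall a x y v, f (a *: x + y) v = a * f x v + f y v) /\
  (forall a x y p, f p (a *: x + y) = a * f p x + f p y) /\
  exists C : R, forall x v, `|f x v| <= C * `|x| * `|v|.

Definition blinV2 (f : U -> U -> V -> R) : Prop :=
  (forall a x y p v, f (a *: x + y) p v = a * f x p v + f y p v) /\
  (forall a x y p v, f p (a *: x + y) v = a * f p x v + f p y v) /\
  (forall a x y p q, f p q (a *: x + y) = a * f p q x + f p q y) /\
  exists C : R, forall x y v, `|f x y v| <= C * `|x| * `|y| * `|v|.

Definition blinV3 (f : U -> U -> U -> V -> R) : Prop :=
  (forall a x y p q v, f (a *: x + y) p q v = a * f x p q v + f y p q v) /\
  (forall a x y p q v, f p (a *: x + y) q v = a * f p x q v + f p y q v) /\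
  (forall a x y p q v, f p q (a *: x + y) v = a * f p q x v + f p q y v) /\
  (forall a x y p q r, f p q r (a *: x + y) = a * f p q r x + f p q r y) /\
  exists C : R, forall x y z v, `|f x y z v| <= C * `|x| * `|y| * `|z| * `|v|.

End Forms.

(* with J' = J1, J'' = J2, J''' = J3 (new direction = last argument);       *)
(* all remainders/continuity estimates are uniform in the operator norm.   *)
Definition C3_frechet {R : realType} {U : normedModType R} (J : U -> R)
  (J1 : U -> U -> R) (J2 : U -> U -> U -> R) (J3 : U -> U -> U -> U -> R) : Prop :=
  (forall w, blin1 (J1 w) /\ blin2 (J2 w) /\ blin3 (J3 w)) /\
  (forall w (e : R), 0 < e -> exists d : R, 0 < d /\ forall h : U, `|h| < d ->
     `|J (w + h) - J w - J1 w h| <= e * `|h|) /\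
  (forall w (e : R), 0 < e -> exists d : R, 0 < d /\ forall h : U, `|h| < d ->
     forall p, `|J1 (w + h) p - J1 w p - J2 w p h| <= e * `|h| * `|p|) /\
  (forall w (e : R), 0 < e -> exists d : R, 0 < d /\ forall h : U, `|h| < d ->
     forall p q, `|J2 (w + h) p q - J2 w p q - J3 w p q h|
                   <= e * `|h| * `|p| * `|q|) /\
  (forall w (e : R), 0 < e -> exists d : R, 0 < d /\ forall w' : U, `|w' - w| < d ->
     forall p q r, `|J3 w' p q r - J3 w p q r| <= e * `|p| * `|q| * `|r|).

(* A w v = A(w)(v), A1 w p v = A'(w)(p,v), A2 w p q v = A''(w)(p,q,v), ... *)
Definition C3_frechet_op {R : realType} {U V : normedModType R} (A : U -> V -> R)
  (A1 : U -> U -> V -> R) (A2 : U -> U -> U -> V -> R)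
  (A3 : U -> U -> U -> U -> V -> R) : Prop :=
  (forall w, blinV0 (A w) /\ blinV1 (A1 w) /\ blinV2 (A2 w) /\ blinV3 (A3 w)) /\
  (forall w (e : R), 0 < e -> exists d : R, 0 < d /\ forall h : U, `|h| < d ->
     forall v, `|A (w + h) v - A w v - A1 w h v| <= e * `|h| * `|v|) /\
  (forall w (e : R), 0 < e -> exists d : R, 0 < d /\ forall h : U, `|h| < d ->
     forall p v, `|A1 (w + h) p v - A1 w p v - A2 w p h v|
                   <= e * `|h| * `|p| * `|v|) /\
  (forall w (e : R), 0 < e -> exists d : R, 0 < d /\ forall h : U, `|h| < d ->
     forall p q v, `|A2 (w + h) p q v - A2 w p q v - A3 w p q h v|
                   <= e * `|h| * `|p| * `|q| * `|v|) /\
  (forall w (e : R), 0 < e -> exists d : R, 0 < d /\ forall w' : U, `|w' - w| < d ->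
     forall p q r v, `|A3 w' p q r v - A3 w p q r v|
                   <= e * `|p| * `|q| * `|r| * `|v|).

(* Main.v *)
Require Import Defs.
From HB Require Import structures.
From mathcomp Require Import all_boot all_order all_algebra.
From mathcomp Require Import all_classical all_reals all_analysis.
From mathcomp Require Import ring lra.
Import Order.TTheory GRing.Theory Num.Theory.
Import numFieldNormedType.Exports.
Local Open Scope classical_set_scope.
Local Open Scope ring_scope.

Lemma is_derive_eps (R : realType) (f : R -> R) x df :
 (forall eps, 0 < eps -> exists d, 0 < d /\ forall h, `|h| < d ->
    `|f (x + h) - f x - h * df| <= eps * `|h|) -> is_derive x 1 f df.
Proof.
move=> H.
have C : (fun h => h^-1 *: ((f \o shift x) (h *: 1) - f x)) @ 0^' --> df.
  apply/cvgrPdist_le => eps eps0.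
  have [d [d0 Hd]] := H eps eps0.
  exists d => // t /= tb tn0.
  rewrite sub0r normrN in tb.
  have := Hd t tb.
  rewrite /shift /= [t%:A]mulr1 [t + x]addrC -[t^-1 *: _]/(t^-1 * _).
  have tn : `|t| != 0 by rewrite normr_eq0.
  have -> : df - t^-1 * (f (x + t) - f x) = - t^-1 * (f (x + t) - f x - t * df).
    by field.
  rewrite normrM normrN normfV ler_pdivrMl ?normr_gt0 // => /le_trans; apply.
  by rewrite mulrC.
apply: DeriveDef; first by apply/cvg_ex; exists df.
exact: cvg_lim C.
Qed.

Section Gen.
Context {R : realType} {U : normedModType R}.

Lemma dir_derive (F : U -> R) (DF : U -> U -> R) (K : R) (w0 e : U) :
 0 <= K ->
 (forall w eps, 0 < eps -> exists d, 0 < d /\ forall h, `|h| < d ->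
    `|F (w + h) - F w - DF w h| <= eps * `|h| * K) ->
 (forall w t, DF w (t *: e) = t * DF w e) ->
 forall s : R, is_derive s 1 (fun s => F (w0 + s *: e)) (DF (w0 + s *: e) e).
Proof.
move=> K0 HF Hlin s; apply: is_derive_eps => eps eps0.
set w := w0 + s *: e.
have ee0 := normr_ge0 e.
have e1 : 0 < (`|e| + 1) * (K + 1) by apply: mulr_gt0; lra.
have [d [d0 Hd]] := HF w (eps / ((`|e| + 1) * (K + 1))) (divr_gt0 eps0 e1).
have e2 : 0 < `|e| + 1 by lra.
exists (d / (`|e| + 1)); split; first exact: divr_gt0.
move=> h hd.
have -> : w0 + (s + h) *: e = w + h *: e by rewrite scalerDl addrA.
have hed : `|h *: e| < d.
  rewrite normrZ; move: hd; rewrite ltr_pdivlMr // => hd.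
  apply: le_lt_trans hd; apply: ler_wpM2l => //; lra.
have := Hd _ hed; rewrite Hlin => /le_trans; apply; rewrite normrZ.
set c := eps / _.
have hc : c * ((`|e| + 1) * (K + 1)) = eps by rewrite /c mulfVK // gt_eqF.
have c0 : 0 <= c by rewrite /c; apply: divr_ge0; lra.
have h0 := normr_ge0 h.
rewrite -hc.
have x0 : 0 <= c * `|h| by apply: mulr_ge0.
have x1 : 0 <= c * `|h| * `|e| by apply: mulr_ge0.
have x2 : 0 <= c * `|h| * K by apply: mulr_ge0.
nra.
Qed.

Lemma dir_cont (F : U -> R) (K : R) (w0 e : U) :
 0 <= K ->
 (forall w eps, 0 < eps -> exists d, 0 < d /\ forall w', `|w' - w| < d ->
    `|F w' - F w| <= eps * K) ->
 continuous (fun s : R => F (w0 + s *: e)).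
Proof.
move=> K0 HF s; apply/cvgrPdist_le => eps eps0.
have ee0 := normr_ge0 e.
have e1 : 0 < K + 1 by lra.
have [d [d0 Hd]] := HF (w0 + s *: e) (eps / (K + 1)) (divr_gt0 eps0 e1).
have e2 : 0 < `|e| + 1 by lra.
exists (d / (`|e| + 1)); first by rewrite /=; apply: divr_gt0.
move=> t /= hd.
rewrite distrC.
have hed : `|(w0 + t *: e) - (w0 + s *: e)| < d.
  rewrite opprD addrACA subrr add0r -scalerBl normrZ.
  move: hd; rewrite ltr_pdivlMr // distrC => hd.
  apply: le_lt_trans hd; apply: ler_wpM2l => //; lra.
apply: le_trans (Hd _ hed) _.
rewrite mulrAC ler_pdivrMr //; nra.
Qed.

End Gen.

Section Comb.
Context {R : realType}.
Implicit Types f g : R -> R.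

Lemma isdD f g (x df dg : R) : is_derive x 1 f df -> is_derive x 1 g dg ->
  is_derive x 1 (fun s => f s + g s) (df + dg).
Proof. by move=> ? ?; exact: (@is_deriveD _ _ _ f g). Qed.

Lemma isdB f g (x df dg : R) : is_derive x 1 f df -> is_derive x 1 g dg ->
  is_derive x 1 (fun s => f s - g s) (df - dg).
Proof. by move=> ? ?; exact: (@is_deriveB _ _ _ f g). Qed.

Lemma isdM f g (x df dg : R) : is_derive x 1 f df -> is_derive x 1 g dg ->
  is_derive x 1 (fun s => f s * g s) (df * g x + f x * dg).
Proof.
move=> H1 H2; have H := @is_deriveM _ _ f g x 1 df dg H1 H2.
have -> : (fun s => f s * g s) = (f * g)%R by [].
apply: is_derive_eq H _.
by rewrite -[f x *: dg]/(f x * dg) -[g x *: df]/(g x * df) addrC mulrC.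
Qed.

Lemma isdid (x : R) : is_derive x 1 (fun s : R => s) 1.
Proof. exact: is_derive_id. Qed.

Lemma isdc (x c : R) : is_derive x 1 (fun _ : R => c) 0.
Proof. exact: is_derive_cst. Qed.

Lemma isd_cont f (x df : R) : is_derive x 1 f df -> f @ x --> f x.
Proof.
case=> dx _; apply: differentiable_continuous; exact/derivable1_diffP.
Qed.

End Comb.
Arguments isdD {R f g x df dg}.
Arguments isdB {R f g x df dg}.
Arguments isdM {R f g x df dg}.
Arguments isd_cont {R f x df}.


Section Lin.
Context {R : realType} {X : lmodType R}.
Variable f : X -> R.
Hypothesis hf : forall a x y, f (a *: x + y) = a * f x + f y.
Lemma lin0 : f 0 = 0.
Proof. have := hf 1 0 0; rewrite scaler0 addr0 mul1r.
by move=> /(congr1 (fun t => t - f 0)); rewrite subrr addrK. Qed.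
Lemma linD x y : f (x + y) = f x + f y.
Proof. by rewrite -[x]scale1r hf mul1r scale1r. Qed.
Lemma linZ a x : f (a *: x) = a * f x.
Proof. by rewrite -[a *: x]addr0 hf lin0 addr0. Qed.
End Lin.

Theorem mainTheorem1 (R : realType) (U V : completeNormedModType R)
  (A : U -> V -> R) (A1 : U -> U -> V -> R) (A2 : U -> U -> U -> V -> R)
  (A3 : U -> U -> U -> U -> V -> R)
  (J : U -> R) (J1 : U -> U -> R) (J2 : U -> U -> U -> R)
  (J3 : U -> U -> U -> U -> R)
  (u : U) (z : V) (Uh : set U) (Vh : set V) (uh : U) (zh : V) (ut : U) (zt : V)
  (b0 bh : R) :
  C3_frechet_op A A1 A2 A3 ->
  C3_frechet J J1 J2 J3 ->
  (forall v, A u v = 0) ->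
  (forall p, A1 u p z = J1 u p) ->
  fin_subspace Uh -> fin_subspace Vh ->
  Uh uh -> (forall v, Vh v -> A uh v = 0) ->
  Vh zh -> (forall p, Uh p -> A1 uh p zh = J1 uh p) ->
  Uh ut -> Vh zt ->
  0 < b0 < 1 -> bh < b0 ->
  `|J u - J uh| < bh * `|J u - J ut| ->
  let rho := fun v : V => - A ut v in
  let rhos := fun p : U => J1 ut p - A1 ut p zt in
  let e := uh - ut in
  let es := zh - zt in
  let Rem := 2^-1 * \int[@lebesgue_measure R]_(s in `[0, 1])
      ((J3 (ut + s *: e) e e e - A3 (ut + s *: e) e e e (zt + s *: es)
        - 3 * A2 (ut + s *: e) e e es) * (s * (s - 1))) in
  let eta := 2^-1 * rho (zh - zt) + 2^-1 * rhos (uh - ut) + rho zt + Rem in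
  ((1 + bh)^-1 * `|eta| <= `|J u - J ut| <= (1 - bh)^-1 * `|eta|) /\
  ((1 + b0)^-1 * `|eta| <= `|J u - J ut| <= (1 - b0)^-1 * `|eta|).
Proof.
move=> [linA [dA [dA1 [dA2 cA3]]]] [linJ [dJ [dJ1 [dJ2 cJ3]]]] Au Az
  [su Uhe] [sv Vhe] Uuh Auh Vzh A1uh Uut Vzt /andP[b00 b01] bhb0 sat.
move=> rho rhos e es Rem eta.
have Ue : Uh e.
  move: Uuh Uut; rewrite Uhe /= => -[cu Hu] [ct Ht].
  exists (fun i => cu i - ct i); rewrite /e Hu Ht -sumrB.
  by apply: eq_bigr => i _; rewrite scalerBl.
have Ves : Vh es.
  move: Vzh Vzt; rewrite Vhe /= => -[cu Hu] [ct Ht].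
  exists (fun i => cu i - ct i); rewrite /es Hu Ht -sumrB.
  by apply: eq_bigr => i _; rewrite scalerBl.
pose w (s : R) := ut + s *: e.
have DJ0 : forall s : R, is_derive s 1 (fun s => J (w s)) (J1 (w s) e).
  move=> s; apply: (@dir_derive _ _ J J1 1) => //.
    by move=> w' eps /(dJ w') [d [d0 Hd]]; exists d; split => // h /Hd; rewrite mulr1.
  by move=> w' t; apply: linZ; case: (linJ w') => [[H _] _].
have DJ1 : forall s : R, is_derive s 1 (fun s => J1 (w s) e) (J2 (w s) e e).
  move=> s; apply: (@dir_derive _ _ (fun w => J1 w e) (fun w h => J2 w e h) `|e|) => //.
    by move=> w' eps /(dJ1 w') [d [d0 Hd]]; exists d; split => // h /Hd; apply.
  move=> w' t; rewrite (@linZ _ _ (fun x => J2 w' e x)) //.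
  by case: (linJ w') => _ [[_ [H _]] _] a x y; apply: H.
have DJ2 : forall s : R, is_derive s 1 (fun s => J2 (w s) e e) (J3 (w s) e e e).
  move=> s; apply: (@dir_derive _ _ (fun w => J2 w e e) (fun w h => J3 w e e h) (`|e| * `|e|)).
  - exact: mulr_ge0.
  - move=> w' eps /(dJ2 w') [d [d0 Hd]]; exists d; split => // h /Hd H.
    by rewrite mulrA; apply: H.
  - move=> w' t; rewrite (@linZ _ _ (fun x => J3 w' e e x)) //.
    by case: (linJ w') => _ [_ [_ [_ [H _]]]] a x y; apply: H.
have DA0 : forall (v : V) (s : R), is_derive s 1 (fun s => A (w s) v) (A1 (w s) e v).
  move=> v s; apply: (@dir_derive _ _ (fun w => A w v) (fun w h => A1 w h v) `|v|) => //.
    by move=> w' eps /(dA w') [d [d0 Hd]]; exists d; split => // h /Hd; apply.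
  move=> w' t; rewrite (@linZ _ _ (fun x => A1 w' x v)) //.
  by case: (linA w') => _ [[H _] _] a x y; apply: H.
have DA1 : forall (v : V) (s : R), is_derive s 1 (fun s => A1 (w s) e v) (A2 (w s) e e v).
  move=> v s; apply: (@dir_derive _ _ (fun w => A1 w e v) (fun w h => A2 w e h v)
     (`|e| * `|v|)).
  - exact: mulr_ge0.
  - move=> w' eps /(dA1 w') [d [d0 Hd]]; exists d; split => // h /Hd H.
    by rewrite mulrA; apply: H.
  - move=> w' t; rewrite (@linZ _ _ (fun x => A2 w' e x v)) //.
    by case: (linA w') => _ [_ [[_ [H _]] _]] a x y; apply: H.
have DA2 : forall (v : V) (s : R), is_derive s 1 (fun s => A2 (w s) e e v) (A3 (w s) e e e v).
  move=> v s; apply: (@dir_derive _ _ (fun w => A2 w e e v) (fun w h => A3 w e e h v)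
     (`|e| * `|e| * `|v|)).
  - by apply: mulr_ge0 => //; apply: mulr_ge0.
  - move=> w' eps /(dA2 w') [d [d0 Hd]]; exists d; split => // h /Hd H.
    by rewrite !mulrA; apply: H.
  - move=> w' t; rewrite (@linZ _ _ (fun x => A3 w' e e x v)) //.
    by case: (linA w') => _ [_ [_ [_ [_ [H _]]]]] a x y; apply: H.
have CJ3 : continuous (fun s => J3 (w s) e e e).
  apply: (@dir_cont _ _ (fun w => J3 w e e e) (`|e| * `|e| * `|e|)).
    by apply: mulr_ge0 => //; apply: mulr_ge0.
  move=> w' eps /(cJ3 w') [d [d0 Hd]]; exists d; split => // h /Hd H.
  by rewrite !mulrA; apply: H.
have CA3 : forall v, continuous (fun s => A3 (w s) e e e v).
  move=> v; apply: (@dir_cont _ _ (fun w => A3 w e e e v) (`|e| * `|e| * `|e| * `|v|)).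
    by apply: mulr_ge0 => //; apply: mulr_ge0 => //; apply: mulr_ge0.
  move=> w' eps /(cA3 w') [d [d0 Hd]]; exists d; split => // h /Hd H.
  by rewrite !mulrA; apply: H.
pose g (s : R) := J (w s) - (A (w s) zt + s * A (w s) es).
pose g1 (s : R) := J1 (w s) e - (A1 (w s) e zt + (A (w s) es + s * A1 (w s) e es)).
pose g2 (s : R) := J2 (w s) e e - (A2 (w s) e e zt + (A1 (w s) e es +
   (A1 (w s) e es + s * A2 (w s) e e es))).
pose g3 (s : R) := J3 (w s) e e e - (A3 (w s) e e e zt + (A2 (w s) e e es +
   (A2 (w s) e e es + (A2 (w s) e e es + s * A3 (w s) e e e es)))).
have Dg : forall s : R, is_derive s 1 g (g1 s).
  move=> s; have T := (isdB (DJ0 s) (isdD (DA0 zt s) (isdM (isdid s) (DA0 es s)))).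
  rewrite /= in T. apply: is_derive_eq T _.
  by rewrite /g1 mul1r.
have Dg1 : forall s : R, is_derive s 1 g1 (g2 s).
  move=> s; have T := (isdB (DJ1 s) (isdD (DA1 zt s) (isdD (DA0 es s) (isdM (isdid s) (DA1 es s))))).
  rewrite /= in T. apply: is_derive_eq T _.
  by rewrite /g2 mul1r.
have Dg2 : forall s : R, is_derive s 1 g2 (g3 s).
  move=> s; have T := (isdB (DJ2 s) (isdD (DA2 zt s) (isdD (DA1 es s) (isdD (DA1 es s)
      (isdM (isdid s) (DA2 es s)))))).
  rewrite /= in T. apply: is_derive_eq T _.
  by rewrite /g3 mul1r.
pose Kf (t : R) := g2 t * (t * t - t) - g1 t * (t + t - 1) + (g t + g t).
pose fI (t : R) := g3 t * (t * t - t).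
have DK : forall t : R, is_derive t 1 Kf (fI t).
  move=> t; have T := (isdD (isdB (isdM (Dg2 t) (isdB (isdM (isdid t) (isdid t)) (isdid t)))
      (isdM (Dg1 t) (isdB (isdD (isdid t) (isdid t)) (isdc t 1))))
      (isdD (Dg t) (Dg t))).
  rewrite /= in T. apply: is_derive_eq T _.
  rewrite /fI; ring.
have CfI : continuous fI.
  move=> t; rewrite /fI /g3.
  apply: cvgM; last first.
    by apply: cvgB; [apply: cvgM|]; exact: cvg_id.
  apply: cvgB; first exact: CJ3.
  apply: cvgD; first exact: CA3.
  have C2 := isd_cont (DA2 es t).
  apply: cvgD => //; apply: cvgD => //; apply: cvgD => //.
  by apply: cvgM; [exact: cvg_id | exact: CA3].
have FTC := @continuous_FTC2 R fI Kf 0 1 ltr01.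
have cont : {within `[0, 1], continuous fI}.
  by apply: continuous_subspaceT => x; exact: CfI.
have dF : derivable_oo_LRcontinuous Kf 0 1.
  split.
  + by move=> x _; case: (DK x).
  + by apply: cvg_at_right_filter; exact: isd_cont (DK 0).
  + by apply: cvg_at_left_filter; exact: isd_cont (DK 1).
have DKd : forall x, derive1 Kf x = fI x.
  by move=> x; rewrite derive1E; case: (DK x).
have Hint := FTC cont dF (fun x _ => DKd x).
have HRem : Rem = 2^-1 * (Kf 1 - Kf 0).
  rewrite /Rem; congr (_ * _).
  have -> : (fun s : R => (J3 (ut + s *: e) e e e - A3 (ut + s *: e) e e e (zt + s *: es)
        - 3 * A2 (ut + s *: e) e e es) * (s * (s - 1))) = fI.
    apply/funext => s; rewrite /fI /g3 /w.
    rewrite (addrC zt) (@linD _ _ (A3 (ut + s *: e) e e e)); last first.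
      by case: (linA (ut + s *: e)) => _ [_ [_ [_ [_ [_ [H _]]]]]].
    rewrite (@linZ _ _ (A3 (ut + s *: e) e e e)); last first.
      by case: (linA (ut + s *: e)) => _ [_ [_ [_ [_ [_ [H _]]]]]].
    ring.
  by rewrite /Rintegral Hint.
have w1 : w 1 = uh by rewrite /w scale1r /e addrC subrK.
have w0 : w 0 = ut by rewrite /w scale0r addr0.
have linAv : forall w' x y, A w' (x + y) = A w' x + A w' y.
  by move=> w' x y; apply: linD; case: (linA w') => [[H _] _].
have linA1v : forall w' p x y, A1 w' p (x + y) = A1 w' p x + A1 w' p y.
  by move=> w' p x y; apply: (@linD _ _ (A1 w' p)); case: (linA w') => _ [[_ [H _]] _].
have zhE : zh = es + zt by rewrite /es subrK.
have g11 : g1 1 = 0.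
  rewrite /g1 w1 mul1r (Auh _ Ves).
  have := A1uh _ Ue; rewrite zhE linA1v => H.
  lra.
have g_1 : g 1 = J uh.
  rewrite /g w1 mul1r.
  have := Auh _ Vzh; rewrite zhE linAv => H; lra.
have g_0 : g 0 = J ut - A ut zt by rewrite /g w0 mul0r addr0.
have g1_0 : g1 0 = J1 ut e - (A1 ut e zt + A ut es) by rewrite /g1 w0 mul0r addr0.
have Heta : eta = J uh - J ut.
  rewrite /eta HRem /Kf g11 g_1 g_0 g1_0 /rho /rhos -/e -/es.
  by field.
set X := `|J u - J ut|.
set Y := `|J u - J uh|.
have X0 : 0 <= X := normr_ge0 _.
have Y0 : 0 <= Y := normr_ge0 _.
have T1 : X <= Y + `|eta|.
  rewrite /X Heta; have -> : J u - J ut = (J u - J uh) + (J uh - J ut) by ring.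
  exact: ler_normD.
have T2 : `|eta| <= X + Y.
  rewrite /X /Y Heta; have -> : J uh - J ut = (J u - J ut) - (J u - J uh) by ring.
  exact: ler_normB.
have bh0 : 0 < bh.
  have : 0 <= bh * X by apply: le_trans (ltW sat).
  move: sat; rewrite -/X -/Y => sat' _.
  rewrite ltNge; apply/negP => bhle.
  have : bh * X <= 0 by apply: mulr_le0_ge0.
  lra.
have sat' : Y < bh * X by [].
have bhX : bh * X <= b0 * X by apply: ler_wpM2r => //; exact: ltW.
have c1 : 0 < 1 + bh by lra.
have c2 : 0 < 1 - bh by lra.
have c3 : 0 < 1 + b0 by lra.
have c4 : 0 < 1 - b0 by lra.
split; apply/andP; split.
- rewrite mulrC ler_pdivrMr //; nra.
- rewrite mulrC ler_pdivlMr //; nra.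
- rewrite mulrC ler_pdivrMr //; nra.
- rewrite mulrC ler_pdivlMr //; nra.
Qed.
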